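(* Let $s\geq2$, and define $f_s:\mathrm{Aut}_{s-1}(H)\to k^{\mathbb{Z}}$ by $f_s(\phi)=(\beta_n)_{n\in\mathbb{Z}}$ where $\phi(x^ny^s)=x^ny^s+\beta_n(x^{n+s}-x^n)$ for all $n\in\mathbb{Z}$. Then $f_s$ is a group homomorphism (into the additive group $k^{\mathbb{Z}}$) with $\mathrm{Ker}(f_s)=\mathrm{Aut}_s(H)$.
   Context: Let $k$ be a field and $0\neq q\in k$ not a root of unity. $H=k_q[x,x^{-1},y]$ is the $k$-algebra generated by $x,x^{-1},y$ with $xx^{-1}=x^{-1}x=1$, $yx=qxy$, a Hopf algebra with $\Delta(x)=x\otimes x$, $\Delta(y)=y\otimes x+1\otimes y$, $\varepsilon(x)=1$, $\varepsilon(y)=0$; $\{x^ny^m:n\in\mathbb{Z},m\in\mathbb{N}\}$ is a $k$-basis. $H_0=\mathrm{span}\{x^n\}$, $H(m)=H_0y^m$. $\mathrm{Aut}_c(H)$ is the group under composition of coalgebra automorphisms of $H$, and for $m\geq1$, $\mathrm{Aut}_m(H)=\{\phi\in\mathrm{Aut}_c(H):\phi(h)=h\text{ for all }h\in\sum_{i=0}^mH(i)\}$. $k^{\mathbb{Z}}$ is the group of sequences in $k$ under componentwise addition. It is a fact (proved in the paper) that for every $\phi\in\mathrm{Aut}_{s-1}(H)$ there is a unique $(\beta_n)_n\in k^{\mathbb{Z}}$ with $\phi(x^ny^s)=x^ny^s+\beta_n(x^{n+s}-x^n)$ for all $n$, so $f_s$ is well defined. *)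

(* Defs.v *)
From HB Require Import structures.
From mathcomp Require Import all_boot all_order all_algebra.
From mathcomp Require Import finmap.
From mathcomp.multinomials Require Import monalg.

Set Implicit Arguments.
Unset Strict Implicit.
Unset Printing Implicit Defensive.

Import Order.TTheory GRing.Theory Num.Theory.
Local Open Scope ring_scope.

(* The underlying vector space of H = k_q[x,x^-1,y]: the basis element
   x^n y^m is the index (n, m) : int * nat. *)
Definition HH (k : fieldType) := {malg k[(int * nat)%type]}.
(* H (x) H, with basis x^a y^b (x) x^c y^d indexed by ((a,b),(c,d)). *)
Definition HT (k : fieldType) := {malg k[((int * nat) * (int * nat))%type]}.

Definition mono (k : fieldType) (n : int) (m : nat) : HH k := << (n, m) >>.

Fixpoint qbin (k : fieldType) (q : k) (m i : nat) : k :=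
  match m, i with
  | 0, 0 => 1
  | 0, _.+1 => 0
  | _.+1, 0 => 1
  | m'.+1, i'.+1 => q ^+ (m' - i') * qbin q m' i' + qbin q m' i'.+1
  end.

(* Delta(x^n y^m) = (x(x)x)^n (y(x)x + 1(x)y)^m
                  = sum_{i=0}^m [m choose i]_q  x^n y^i (x) x^(n+i) y^(m-i),
   using (1(x)y)(y(x)x) = q (y(x)x)(1(x)y) since yx = qxy. *)
Definition comul_mono (k : fieldType) (q : k) (p : int * nat) : HT k :=
  \sum_(i < p.2.+1)
     << qbin q p.2 i *g ((p.1, (i : nat)), (p.1 + (i : nat)%:Z, (p.2 - i)%N)) >>.

Definition comul (k : fieldType) (q : k) (v : HH k) : HT k :=
  \sum_(p <- msupp v) v@_p *: comul_mono q p.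

Definition counit (k : fieldType) (v : HH k) : k :=
  \sum_(p <- msupp v | p.2 == 0%N) v@_p.

Definition tens (k : fieldType) (u v : HH k) : HT k :=
  \sum_(a <- msupp u) \sum_(b <- msupp v) << u@_a * v@_b *g (a, b) >>.

Definition tmap (k : fieldType) (phi : HH k -> HH k) (w : HT k) : HT k :=
  \sum_(p <- msupp w) w@_p *: tens (phi << p.1 >>) (phi << p.2 >>).

Definition is_coalg_aut (k : fieldType) (q : k) (phi : HH k -> HH k) : Prop :=
  [/\ (forall u v, phi (u + v) = phi u + phi v),
      (forall (a : k) u, phi (a *: u) = a *: phi u),
      bijective phi,
      (forall h, comul q (phi h) = tmap phi (comul q h)) &
      (forall h, counit (phi h) = counit h)].

Definition in_Hle (k : fieldType) (m : nat) (h : HH k) : Prop :=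
  forall p, p \in msupp h -> (p.2 <= m)%N.

Definition is_Aut_m (k : fieldType) (q : k) (m : nat) (phi : HH k -> HH k) :=
  is_coalg_aut q phi /\ (forall h, in_Hle m h -> phi h = h).

(* Main.v *)
Require Import Defs.
From HB Require Import structures.
From mathcomp Require Import all_boot all_order all_algebra.
From mathcomp Require Import finmap.
From mathcomp.multinomials Require Import monalg.
Import Order.TTheory GRing.Theory Num.Theory.
Local Open Scope ring_scope.
Set Implicit Arguments.
Unset Strict Implicit.


Section Lext.
Variables (k : fieldType) (K : choiceType) (V : lmodType k).

Definition lext (T : K -> V) (w : {malg k[K]}) : V :=
  \sum_(p <- msupp w) w@_p *: T p.

Lemma lextEw T (d : {fset K}) w : (msupp w `<=` d)%fset ->
  lext T w = \sum_(p <- d) w@_p *: T p.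
Proof.
move=> le; rewrite /lext [LHS](big_fset_incl _ le) => //= x xd /mcoeff_outdom ->.
by rewrite scale0r.
Qed.

Lemma lextD T u v : lext T (u + v) = lext T u + lext T v.
Proof.
set E := (msupp u `|` msupp v `|` msupp (u + v))%fset.
have h1 : (msupp u `<=` E)%fset by rewrite /E -fsetUA fsubsetUl.
have h2 : (msupp v `<=` E)%fset by rewrite /E fsetUC fsetUA fsubsetUr.
have h3 : (msupp (u + v) `<=` E)%fset by rewrite /E fsubsetUr.
rewrite (lextEw T h1) (lextEw T h2) (lextEw T h3).
by rewrite -big_split; apply/eq_bigr=> p _; rewrite mcoeffD scalerDl.
Qed.

Lemma lextZ T (c : k) u : lext T (c *: u) = c *: lext T u.
Proof.
rewrite (lextEw T (msuppZ_le c u)) /lext scaler_sumr.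
by apply/eq_bigr=> p _; rewrite mcoeffZ scalerA.
Qed.

Lemma lextU T (c : k) p : lext T << c *g p >> = c *: T p.
Proof. by rewrite (lextEw T msuppU_le) big_seq_fset1 mcoeffUU. Qed.

Lemma eq_lext T1 T2 w : (forall p, T1 p = T2 p) -> lext T1 w = lext T2 w.
Proof. by move=> e; apply/eq_bigr=> p _; rewrite e. Qed.
End Lext.
Arguments lext {k K V}.
Arguments lextEw {k K V}.
Arguments lextD {k K V}.
Arguments lextZ {k K V}.
Arguments lextU {k K V}.
Arguments eq_lext {k K V}.

Lemma lin_sum (k : fieldType) (V W : lmodType k) (F : V -> W)
  (FD : forall u v, F (u + v) = F u + F v) (FZ : forall (a : k) u, F (a *: u) = a *: F u)
  (I : Type) (s : seq I) (g : I -> V) :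
  F (\sum_(i <- s) g i) = \sum_(i <- s) F (g i).
Proof.
elim: s => [|x s IH]; rewrite ?big_nil ?big_cons.
  by rewrite -(scale0r (0 : V)) FZ scale0r.
by rewrite FD IH.
Qed.

Lemma lext_comp (k : fieldType) (K : choiceType) (V W : lmodType k) (F : V -> W)
  (FD : forall u v, F (u + v) = F u + F v) (FZ : forall (a : k) u, F (a *: u) = a *: F u)
  (T : K -> V) w : F (lext T w) = lext (fun p => F (T p)) w.
Proof.
rewrite /lext (lin_sum FD FZ); apply/eq_bigr => p _; by rewrite FZ.
Qed.

Lemma lext_swap (k : fieldType) (K1 K2 : choiceType) (V : lmodType k)
  (X : K1 -> K2 -> V) u w :
  lext (fun b => lext (fun a => X a b) u) w = lext (fun a => lext (fun b => X a b) w) u.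
Proof.
rewrite /lext.
under eq_bigr do rewrite scaler_sumr.
rewrite exchange_big /=; apply/eq_bigr => a _; rewrite scaler_sumr.
by apply/eq_bigr => b _; rewrite !scalerA mulrC.
Qed.

Lemma malgU_scale (k : fieldType) (K : choiceType) (c : k) (p : K) :
  << c *g p >> = c *: (<< p >> : {malg k[K]}).
Proof. by apply/malgP => x; rewrite mcoeffZ !mcoeffU mulr_natr. Qed.

Lemma lext_id (k : fieldType) (K : choiceType) (w : {malg k[K]}) :
  w = lext (fun p => << p >>) w.
Proof.
rewrite {1}(monalgE w) /lext; apply/eq_bigr => p _; exact: malgU_scale.
Qed.

Lemma tens_lext (k : fieldType) (u v : HH k) :
  tens u v = lext (fun a => lext (fun b => (<< (a, b) >> : HT k)) v) u.
Proof.
rewrite /tens /lext; apply/eq_bigr => a _; rewrite scaler_sumr.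
by apply/eq_bigr => b _; rewrite malgU_scale scalerA.
Qed.

Lemma tens_linl (k : fieldType) (K : choiceType) (T : K -> HH k) w (v : HH k) :
  tens (lext T w) v = lext (fun p => tens (T p) v) w.
Proof.
rewrite tens_lext (lext_comp (lextD _) (lextZ _)).
by apply: eq_lext => p; rewrite tens_lext.
Qed.

Lemma tens_linr (k : fieldType) (K : choiceType) (T : K -> HH k) w (u : HH k) :
  tens u (lext T w) = lext (fun p => tens u (T p)) w.
Proof.
rewrite tens_lext.
rewrite (@eq_lext _ _ _ _ (fun a => lext (fun p => lext (fun b => (<< (a, b) >> : HT k)) (T p)) w)); last first.
  by move=> a; rewrite (lext_comp (lextD _) (lextZ _)).
rewrite -lext_swap; apply: eq_lext => p; by rewrite tens_lext.
Qed.

Lemma phi_lext (k : fieldType) (phi : HH k -> HH k)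
  (FD : forall u v, phi (u + v) = phi u + phi v) (FZ : forall (a : k) u, phi (a *: u) = a *: phi u)
  (w : HH k) : phi w = lext (fun p => phi << p >>) w.
Proof. by rewrite {1}(lext_id w) (lext_comp FD FZ). Qed.

Lemma tmapE (k : fieldType) (phi : HH k -> HH k) w :
  tmap phi w = lext (fun p => tens (phi << p.1 >>) (phi << p.2 >>)) w.
Proof. by []. Qed.

Lemma tmap_tens (k : fieldType) (phi : HH k -> HH k)
  (FD : forall u v, phi (u + v) = phi u + phi v) (FZ : forall (a : k) u, phi (a *: u) = a *: phi u)
  (u v : HH k) : tmap phi (tens u v) = tens (phi u) (phi v).
Proof.
rewrite tmapE tens_lext (lext_comp (lextD _) (lextZ _)).
rewrite (phi_lext FD FZ u) (phi_lext FD FZ v) tens_linl.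
apply: eq_lext => a; rewrite (lext_comp (lextD _) (lextZ _)) tens_linr.
by apply: eq_lext => b; rewrite lextU scale1r.
Qed.

Lemma tmap_comp (k : fieldType) (phi psi : HH k -> HH k)
  (FD : forall u v, phi (u + v) = phi u + phi v) (FZ : forall (a : k) u, phi (a *: u) = a *: phi u)
  (w : HT k) : tmap phi (tmap psi w) = tmap (phi \o psi) w.
Proof.
rewrite (tmapE psi) (tmapE phi) (lext_comp (lextD _) (lextZ _)).
by apply: eq_lext => p; rewrite -tmapE tmap_tens.
Qed.

Lemma comp_aut (k : fieldType) (q : k) phi psi :
  is_coalg_aut q phi -> is_coalg_aut q psi -> is_coalg_aut q (phi \o psi).
Proof.
case=> D1 Z1 B1 C1 E1 [D2 Z2 B2 C2 E2]; split => /=.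
- by move=> u v; rewrite D2 D1.
- by move=> a u; rewrite Z2 Z1.
- exact: bij_comp.
- by move=> h; rewrite C1 C2 tmap_comp.
- by move=> h; rewrite E1 E2.
Qed.

Lemma in_Hle_U (k : fieldType) m (p : int * nat) : (p.2 <= m)%N -> in_Hle m (<< p >> : HH k).
Proof. by move=> hp x; rewrite msuppU oner_eq0 inE => /eqP ->. Qed.

Lemma in_Hle_v (k : fieldType) m (a b : int) : in_Hle m (mono k a 0 - mono k b 0).
Proof.
move=> x /(fsubsetP (msuppB_le _ _)); rewrite inE /mono !msuppU !oner_eq0 !inE.
by case/orP => /eqP ->.
Qed.

Lemma coef_v (k : fieldType) (s : nat) (n : int) : (0 < s)%N ->
  (mono k (n + s%:Z) 0 - mono k n 0)@_(n + s%:Z, 0%N) = 1.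
Proof.
move=> hs; rewrite mcoeffB /mono !mcoeffU eqxx mulr1n.
have -> : ((n, 0%N) == (n + s%:Z, 0%N)) = false.
  apply/negbTE/negP => /eqP [] /(congr1 (fun z => z - n)) /=.
  rewrite subrr addrC addKr => /eqP; rewrite eq_sym eqz_nat.
  by case: s hs.
by rewrite subr0.
Qed.

Lemma scal_cancel (k : fieldType) (s : nat) (n : int) (x : HH k) (a b : k) : (0 < s)%N ->
  x + a *: (mono k (n + s%:Z) 0 - mono k n 0) = x + b *: (mono k (n + s%:Z) 0 - mono k n 0) ->
  a = b.
Proof.
move=> hs /addrI /(congr1 (mcoeff (n + s%:Z, 0%N))).
by rewrite !mcoeffZ coef_v // !mulr1.
Qed.

Theorem lemma3p6 (k : fieldType) (q : k) (hq0 : q != 0)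
  (hq : forall n : nat, (0 < n)%N -> q ^+ n != 1)
  (s : nat) (hs : (2 <= s)%N)
  (f : (HH k -> HH k) -> int -> k)
  (hf : forall phi, is_Aut_m q s.-1 phi ->
        forall n : int,
          phi (mono k n s) =
          mono k n s + f phi n *: (mono k (n + s%:Z) 0 - mono k n 0)) :
  (forall phi psi, is_Aut_m q s.-1 phi -> is_Aut_m q s.-1 psi ->
     forall n : int, f (phi \o psi) n = f phi n + f psi n)
  /\
  (forall phi, (is_Aut_m q s.-1 phi /\ (forall n : int, f phi n = 0))
               <-> is_Aut_m q s phi).
Proof.
have s0 : (0 < s)%N by apply: leq_trans hs.
split.
  move=> phi psi P1 P2 n; case: (P1) => A1 F1; case: (P2) => A2 F2.
  have A : is_Aut_m q s.-1 (phi \o psi).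
    split; first exact: comp_aut.
    by move=> h hh /=; rewrite F2 // F1.
  pose v := (mono k (n + s%:Z) 0 - mono k n 0).
  suff E : mono k n s + f (phi \o psi) n *: v = mono k n s + (f phi n + f psi n) *: v.
    exact: (scal_cancel s0 E).
  rewrite /v -(hf _ A) /= (hf psi P2).
  case: A1 => D1 Z1 _ _ _.
  rewrite D1 Z1 (hf phi P1) (F1 _ (@in_Hle_v k s.-1 _ _)).
  by rewrite -addrA -scalerDl.
move=> phi; split.
  move=> [P1 H0]; case: (P1) => A1 F1; split => // h hh.
  have [D1 Z1 _ _ _] := A1.
  rewrite (phi_lext D1 Z1) {2}(lext_id h) /lext big_seq [RHS]big_seq.
  apply: eq_bigr => p hp; congr (_ *: _).
  have := hh p hp; rewrite leq_eqVlt; case/orP => [/eqP e | lt].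
    case: p hp e => a b hp /= ->.
    by rewrite -/(mono k a s) (hf phi P1) H0 scale0r addr0.
  by apply: F1; apply: in_Hle_U; rewrite -ltnS prednK.
move=> [A1 F1].
have A2 : is_Aut_m q s.-1 phi.
  split => // h hh; apply: F1 => p hp; apply: leq_trans (hh p hp) _; exact: leq_pred.
split => // n.
pose v := (mono k (n + s%:Z) 0 - mono k n 0).
suff E : mono k n s + f phi n *: v = mono k n s + 0 *: v by exact: (scal_cancel s0 E).
rewrite /v -(hf _ A2) F1 ?scale0r ?addr0 //.
by apply: in_Hle_U.
Qed.
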